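(* Let $q$ be a prime power and $\mathcal{C}\subseteq\mathbb{F}_q^n$ a linear code of dimension $k$. Let $U\subseteq[n]$ be the set of coordinates $i$ such that some codeword of $\mathcal{C}$ is nonzero at $i$, and for $i\in U$ let $w_i = \min\{\mathrm{wt}(c) : c\in\mathcal{C},\ c_i\neq 0\}$. Then $\sum_{i\in U} \frac{1}{w_i} \le k$.
   Context: $\mathrm{wt}(c)$ is the number of nonzero coordinates of $c$. *)

(* Defs.v *)
From HB Require Import structures.
From mathcomp Require Import all_boot all_order all_algebra all_field.
Set Implicit Arguments. Unset Strict Implicit. Unset Printing Implicit Defensive.
Import Order.TTheory GRing.Theory Num.Theory.
Local Open Scope ring_scope.

Definition wt (F : finFieldType) (n : nat) (c : 'rV[F]_n) : nat :=
  #|[set i : 'I_n | c 0 i != 0]|.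

Definition code_support (F : finFieldType) (n : nat) (C : {vspace 'rV[F]_n})
  : {set 'I_n} :=
  [set i : 'I_n | [exists c : 'rV[F]_n, (c \in C) && (c 0 i != 0)]].

(* w_i = min { wt c : c \in C, c_i <> 0 }  (the default value n is only
   used when no such codeword exists, i.e. for i outside the support;
   for i in the support the minimum is the true minimum since wt c <= n). *)
Definition minwt (F : finFieldType) (n : nat) (C : {vspace 'rV[F]_n}) (i : 'I_n)
  : nat :=
  \big[minn/n]_(c : 'rV[F]_n | (c \in C) && (c 0 i != 0)) wt c.

(* Main.v *)
Require Import Defs.
From HB Require Import structures.
From mathcomp Require Import all_boot all_order all_algebra all_field.
Import Order.TTheory GRing.Theory Num.Theory.
Local Open Scope ring_scope.

Section Aux.
Variables (F : finFieldType) (n : nat).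
Implicit Types (C : {vspace 'rV[F]_n}) (x : 'rV[F]_n).

Lemma wt_le x : (wt x <= n)%N.
Proof. by rewrite /wt -[X in (_ <= X)%N](card_ord n) max_card. Qed.

Lemma minwt_le C i x : x \in C -> x 0 i != 0 -> (minwt C i <= wt x)%N.
Proof.
move=> Cx xi; rewrite /minwt.
have : x \in index_enum 'rV[F]_n by rewrite mem_index_enum.
elim: (index_enum _) => [//|y r IHr]; rewrite inE big_cons.
case/orP => [/eqP <-|xr]; first by rewrite Cx xi /=; apply: geq_minl.
case: ifP => _; last exact: IHr.
by rewrite geq_min IHr ?orbT.
Qed.

Lemma minwt_len C i : (minwt C i <= n)%N.
Proof.
rewrite /minwt; elim/big_ind: _ => //= [a b ha hb|x _]; last exact: wt_le.
by rewrite geq_min ha.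
Qed.

Lemma minwt_ge C i b : (forall x, x \in C -> x 0 i != 0 -> (b <= wt x)%N) ->
  (b <= n)%N -> (b <= minwt C i)%N.
Proof.
move=> h hn; rewrite /minwt; elim/big_ind: _ => //= [a c ha hc|x /andP[]].
  by rewrite leq_min ha hc.
exact: h.
Qed.

Lemma wt_gt0 x i : x 0 i != 0 -> (0 < wt x)%N.
Proof. by move=> h; rewrite /wt card_gt0; apply/set0Pn; exists i; rewrite inE. Qed.

Arguments wt_gt0 {x i}.
Arguments minwt_le {C i x}.

Definition bound C := \sum_(i in code_support C) ((minwt C i)%:R : rat)^-1
   <= (\dim C)%:R.

Lemma step C : (forall C', (\dim C' < \dim C)%N -> bound C') -> bound C.
Proof.
move=> IH; rewrite /bound.
have [U0|[i0 Ui0]] := set_0Vmem (code_support C).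
  by rewrite U0 big_set0 ler0n.
move: (Ui0); rewrite inE => /existsP [c0 /andP [Cc0 c0i0]].
have c0nz : c0 != 0 by apply/eqP => h; move: c0i0; rewrite h mxE eqxx.
case: (@arg_minnP _ c0 (fun x => (x \in C) && (x != 0)) (@wt F n)).
  by rewrite Cc0 c0nz.
move=> c /andP[Cc cnz] cmin.
set S := [set j | c 0 j != 0].
have [j0 cj0] : exists j, c 0 j != 0.
  case: (pickP [pred j | c 0 j != 0]) => [j cj | h]; first by exists j.
  by case/negP: cnz; apply/eqP/rowP => j; rewrite mxE; move: (h j) => /= /negbFE/eqP.
have d_gt0 : (0 < wt c)%N by apply: (wt_gt0 cj0).
have hS : forall j, j \in S -> minwt C j = wt c.
  move=> j; rewrite inE => cj; apply/anti_leq.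
  rewrite (minwt_le Cc cj) /=; apply: minwt_ge; last exact: wt_le.
  move=> x Cx xj; apply: cmin; rewrite Cx /=.
  by apply/eqP => h; move: xj; rewrite h mxE eqxx.
have SU : S \subset code_support C.
  apply/subsetP => j; rewrite !inE => cj; apply/existsP; exists c; by rewrite Cc.
pose D : 'M[F]_n := diag_mx (\row_j (if j \in S then 0 else 1)).
pose f : 'End('rV[F]_n) := linfun (mulmxr D).
have fE : forall x j, f x 0 j = if j \in S then 0 else x 0 j.
  move=> x j; rewrite lfunE /= mul_mx_diag !mxE.
  by case: ifP; rewrite ?mulr0 ?mulr1.
have wtf : forall x, (wt (f x) <= wt x)%N.
  move=> x; apply: subset_leq_card; apply/subsetP => j; rewrite !inE fE.
  by case: ifP; rewrite ?eqxx.
set C' := (f @: C)%VS.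
have dimlt : (\dim C' < \dim C)%N.
  rewrite -(limg_ker_dim f C) -add1n leq_add2r.
  have fc : c \in (C :&: lker f)%VS.
    apply/memv_capP; split => //; rewrite memv_ker; apply/eqP/rowP => j.
    rewrite fE mxE; case: ifP => // /negbT; rewrite inE negbK => /eqP //.
  have := dimvS (U:=<[c]>%VS) (V:=(C :&: lker f)%VS); rewrite dim_vline cnz; apply.
  by rewrite -memvE.
have IHC := IH C' dimlt; rewrite /bound in IHC.
rewrite (big_setID S) /= (setIidPr SU).
rewrite (eq_bigr (fun _ => ((wt c)%:R : rat)^-1)); last by move=> j /hS ->.
rewrite sumr_const (_ : #|S| = wt c) // -[_ *+ wt c]mulr_natr mulVf ?pnatr_eq0 -?lt0n //.
have hU : forall i, i \in code_support C :\: S ->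
   (i \in code_support C') && (0 < minwt C' i <= minwt C i)%N.
  move=> i /setDP[]; rewrite inE => /existsP[x /andP[Cx xi]] iS.
  have fxi : f x 0 i != 0 by rewrite fE (negbTE iS).
  have Cfx : f x \in C' by apply: memv_img.
  apply/andP; split; first by rewrite inE; apply/existsP; exists (f x); rewrite Cfx.
  apply/andP; split.
    apply: minwt_ge => [y _ yi|]; first exact: (wt_gt0 yi).
    by apply: leq_ltn_trans (leq0n i) (ltn_ord i).
  apply: minwt_ge; last exact: minwt_len.
  move=> y Cy yi; apply: leq_trans (wtf y).
  by apply: minwt_le; [apply: memv_img | rewrite fE (negbTE iS)].
have le1 : \sum_(i in code_support C :\: S) ((minwt C i)%:R : rat)^-1 <=
           \sum_(i in code_support C :\: S) ((minwt C' i)%:R : rat)^-1.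
  apply: ler_sum => i /hU /andP[_ /andP[p1 p2]].
  rewrite lef_pV2 ?ler_nat // posrE ltr0n //; exact: leq_trans p1 p2.
have le2 : \sum_(i in code_support C :\: S) ((minwt C' i)%:R : rat)^-1 <=
           \sum_(i in code_support C') ((minwt C' i)%:R : rat)^-1.
  rewrite [X in _ <= X](big_setID (code_support C :\: S)) /=.
  have -> : code_support C' :&: (code_support C :\: S) = code_support C :\: S.
    by apply/setIidPr/subsetP => i /hU /andP[].

  by rewrite lerDl sumr_ge0 // => i _; rewrite invr_ge0 ler0n.
apply: le_trans (_ : 1 + (\dim C')%:R <= _).
  by rewrite lerD2l (le_trans le1 (le_trans le2 IHC)).
by rewrite addrC natr1 ler_nat.
Qed.

Lemma key m C : (\dim C <= m)%N -> bound C.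
Proof.
elim: m C => [|m IHm] C hC; apply: step => C' hC'.
  by move: (leq_trans hC' hC).
by apply: IHm; rewrite -ltnS (leq_trans hC' hC).
Qed.

End Aux.

Theorem claim5p4 (F : finFieldType) (n k : nat) (C : {vspace 'rV[F]_n}) :
  \dim C = k ->
  \sum_(i in code_support C) ((minwt C i)%:R : rat)^-1 <= k%:R.
Proof. by move=> <-; apply: (@key F n _ C (leqnn _)). Qed.
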